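(* Let $\mathcal{H}$ be a real Hilbert space, let $A_1, A_2:\mathcal{H}\to 2^{\mathcal{H}}$ be maximally monotone, let $B:\mathcal{H}\to\mathcal{H}$ be monotone and $L$-Lipschitz continuous ($L>0$), let $C:\mathcal{H}\to\mathcal{H}$ be $\beta$-cocoercive ($\beta>0$), and assume that $\mathrm{zer}(A_1+A_2+B+C)\neq\emptyset$. Let $\lambda>0$ and $\gamma\in\left(0,\frac{\lambda\beta}{\beta+\lambda(2\beta L+1)}\right)$. Let $x_0,x_{-1},u_0\in\mathcal{H}$ and define for $n\ge0$ $$\begin{aligned}x_{n+1}&=J_{\gamma A_2}\big(x_n-\gamma u_n-\gamma(2Bx_n-Bx_{n-1})-\gamma Cx_n\big),\\ y_{n+1}&=J_{\lambda A_1}(2x_{n+1}-x_n+\lambda u_n),\\ u_{n+1}&=u_n+\tfrac{1}{\lambda}(2x_{n+1}-x_n-y_{n+1}).\end{aligned}$$ Then $\{x_n\}$ converges weakly to a point $\bar x\in\mathrm{zer}(A_1+A_2+B+C)$.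
   Context: $J_{\gamma A}=(\mathrm{Id}+\gamma A)^{-1}$ denotes the resolvent of a maximally monotone operator $A$. $\mathrm{zer}(T)=\{x:0\in Tx\}$. $C$ is $\beta$-cocoercive if $\langle x-y,Cx-Cy\rangle\ge\beta\|Cx-Cy\|^2$ for all $x,y$. *)

(* Defs.v *)
From HB Require Import structures.
From mathcomp Require Import all_boot all_order all_algebra.
From mathcomp Require Import all_classical all_reals topology normedtype sequences.
Set Implicit Arguments. Unset Strict Implicit. Unset Printing Implicit Defensive.
Import Order.TTheory GRing.Theory Num.Theory.
Import numFieldNormedType.Exports.
Local Open Scope classical_set_scope.
Local Open Scope ring_scope.

Record hilbert (R : realType) (H : lmodType R) := Hilbert {
  ip : H -> H -> R;
  ip_sym : forall x y, ip x y = ip y x;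
  ip_linl : forall (a : R) (x y z : H), ip (a *: x + y) z = a * ip x z + ip y z;
  ip_ge0 : forall x, 0 <= ip x x;
  ip_eq0 : forall x, ip x x = 0 -> x = 0;
  ip_complete : forall u : nat -> H,
    (forall e : R, 0 < e -> exists N : nat, forall m n : nat, (N <= m)%N -> (N <= n)%N ->
        Num.sqrt (ip (u m - u n) (u m - u n)) < e) ->
    exists l : H, (fun n => Num.sqrt (ip (u n - l) (u n - l))) @ \oo --> (0 : R)
}.

Section Ops.
Context (R : realType) (H : lmodType R) (I : hilbert H).

Definition hnorm (x : H) : R := Num.sqrt (ip I x x).

(* set-valued operators are represented by their graphs: A x u  <->  u \in A x *)
Definition monotone_op (A : H -> H -> Prop) :=
  forall x y u v, A x u -> A y v -> 0 <= ip I (x - y) (u - v).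

Definition maximally_monotone (A : H -> H -> Prop) :=
  monotone_op A /\
  forall x u, (forall y v, A y v -> 0 <= ip I (x - y) (u - v)) -> A x u.

Definition monotone_fun (B : H -> H) := monotone_op (fun x u => u = B x).

Definition L_lipschitz (L : R) (B : H -> H) :=
  forall x y, hnorm (B x - B y) <= L * hnorm (x - y).

Definition cocoercive (beta : R) (C : H -> H) :=
  forall x y, beta * hnorm (C x - C y) ^+ 2 <= ip I (x - y) (C x - C y).

(* p = J_{gamma A} z  <->  z \in p + gamma A p *)
Definition resolvent (gamma : R) (A : H -> H -> Prop) (z p : H) :=
  exists a, A p a /\ z = p + gamma *: a.

Definition zer4 (A1 A2 : H -> H -> Prop) (B C : H -> H) (x : H) :=
  exists a1 a2, A1 x a1 /\ A2 x a2 /\ a1 + a2 + B x + C x = 0.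

Definition weak_cvg (x : nat -> H) (l : H) :=
  forall y : H, (fun n => ip I (x n) y) @ \oo --> ip I l y.

End Ops.

(* x_{n-1} for n >= 0, given x_{-1} = xm1 *)
Definition xprev (T : Type) (x : nat -> T) (xm1 : T) (n : nat) : T :=
  match n with 0 => xm1 | k.+1 => x k end.

(* Main.v *)
Require Import Defs.
From HB Require Import structures.
From mathcomp Require Import all_boot all_order all_algebra.
From mathcomp Require Import all_classical all_reals topology normedtype sequences.
From mathcomp Require Import ring lra.
Import Order.TTheory GRing.Theory Num.Theory.
Import numFieldNormedType.Exports.
Local Open Scope classical_set_scope.
Local Open Scope ring_scope.
Set Implicit Arguments. Unset Strict Implicit. Unset Printing Implicit Defensive.
Section Basics.
Context (R : realType) (H : lmodType R) (I : hilbert H).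
Local Notation ipp := (ip I).

Definition Nn (v : H) := ip I v v.

Lemma ip0l z : ipp 0 z = 0.
Proof. have := ip_linl I 1 0 0 z; rewrite scale1r addr0 mul1r => h; lra. Qed.
Lemma ipDl x y z : ipp (x + y) z = ipp x z + ipp y z.
Proof. by have := ip_linl I 1 x y z; rewrite scale1r mul1r. Qed.
Lemma ipZl a x z : ipp (a *: x) z = a * ipp x z.
Proof. by have := ip_linl I a x 0 z; rewrite addr0 ip0l addr0. Qed.
Lemma ipNl x z : ipp (- x) z = - ipp x z.
Proof. by rewrite -scaleN1r ipZl mulN1r. Qed.
Lemma ip0r z : ipp z 0 = 0.
Proof. by rewrite ip_sym ip0l. Qed.
Lemma ipDr x y z : ipp z (x + y) = ipp z x + ipp z y.
Proof. by rewrite ip_sym ipDl !(ip_sym _ z). Qed.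
Lemma ipZr a x z : ipp z (a *: x) = a * ipp z x.
Proof. by rewrite ip_sym ipZl (ip_sym _ z). Qed.
Lemma ipNr x z : ipp z (- x) = - ipp z x.
Proof. by rewrite ip_sym ipNl (ip_sym _ z). Qed.
Lemma ipBl x y z : ipp (x - y) z = ipp x z - ipp y z.
Proof. by rewrite ipDl ipNl. Qed.
Lemma ipBr x y z : ipp z (x - y) = ipp z x - ipp z y.
Proof. by rewrite ipDr ipNr. Qed.

Lemma Nn_ge0 v : 0 <= Nn v. Proof. exact: ip_ge0. Qed.
Lemma Nn_eq0 v : Nn v = 0 -> v = 0. Proof. exact: ip_eq0. Qed.

Lemma sq_lt (a e : R) : a * a < e * e -> 0 < e -> `|a| < e.
Proof. move=> h he; have [ha|ha] := lerP 0 a; [rewrite ger0_norm // | rewrite ltr0_norm //]; nra. Qed.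

Lemma Nn_expand x y : Nn (x + y) = Nn x + 2 * ipp x y + Nn y.
Proof. rewrite /Nn !ipDl !ipDr (ip_sym _ y x); lra. Qed.

Lemma CS x y : ipp x y * ipp x y <= Nn x * Nn y.
Proof.
have [/Nn_eq0 ->|ny0] := eqVneq (Nn y) 0; first by rewrite /Nn !ip0r !mulr0.
have nyp : 0 < Nn y by rewrite lt0r ny0 Nn_ge0.
set t := ipp x y / Nn y.
have h := Nn_ge0 (x - t *: y).
move: h; rewrite /Nn !ipBl !ipBr !ipZl !ipZr (ip_sym _ y x) -/(Nn x) -/(Nn y).
have ht : t * Nn y = ipp x y by rewrite /t mulrAC -mulrA divff // mulr1.
clearbody t; move=> h; rewrite -ht in h *; have := mulr_ge0 h (ltW nyp); nra.
Qed.

Lemma young x y t : 0 < t -> 2 * ipp x y <= t * Nn x + t^-1 * Nn y.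
Proof.
move=> ht; have h := Nn_ge0 (t *: x - y).
have e : Nn (t *: x - y) = t * t * Nn x - 2 * t * ipp x y + Nn y.
  rewrite /Nn !ipBl !ipBr !ipZl !ipZr (ip_sym _ y x); lra.
rewrite e in h.
have hti : 0 < t^-1 by rewrite invr_gt0.
have h2 := mulr_ge0 (ltW hti) h.
have e2 : t^-1 * (t * t * Nn x - 2 * t * ipp x y + Nn y) = t * Nn x - 2 * ipp x y + t^-1 * Nn y.
  by field; rewrite gt_eqF.
lra.
Qed.

Lemma Nn_add2 x y : Nn (x + y) <= 2 * Nn x + 2 * Nn y.
Proof. have := Nn_ge0 (x - y); rewrite !Nn_expand /Nn !ipNl !ipNr; lra. Qed.

Lemma NnZ a x : Nn (a *: x) = a * a * Nn x.
Proof. by rewrite /Nn ipZl ipZr mulrA. Qed.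
Lemma NnN x : Nn (- x) = Nn x.
Proof. by rewrite /Nn ipNl ipNr opprK. Qed.
Lemma Nn_sym x y : Nn (x - y) = Nn (y - x).
Proof. by rewrite -NnN opprB. Qed.

End Basics.
Section Seqs.
Context (R : realType).

Definition cvz (a : nat -> R) := forall e, 0 < e -> exists N, forall n, (N <= n)%N -> `|a n| < e.

Lemma cvz_le (a b : nat -> R) : (forall n, `|b n| <= a n) -> cvz a -> cvz b.
Proof.
move=> hab ha e he; have [N hN] := ha e he; exists N => n hn.
have := hN n hn; have := hab n; have := ler_norm (a n); lra.
Qed.

Lemma cvz_eq (a b : nat -> R) : cvz a -> (forall n, a n = b n) -> cvz b.
Proof. move=> ha hab e he; have [N hN] := ha e he; exists N => n hn; rewrite -hab; exact: hN. Qed.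

Lemma cvz_add (a b : nat -> R) : cvz a -> cvz b -> cvz (fun n => a n + b n).
Proof.
move=> ha hb e he; have he2 : 0 < e / 2 by lra.
have [N1 h1] := ha _ he2; have [N2 h2] := hb _ he2.
exists (maxn N1 N2) => n hn.
have := h1 n (leq_trans (leq_maxl _ _) hn); have := h2 n (leq_trans (leq_maxr _ _) hn).
have := ler_normD (a n) (b n); lra.
Qed.

Lemma cvz_scale (c : R) (a : nat -> R) : cvz a -> cvz (fun n => c * a n).
Proof.
move=> ha e he; have hc : 0 < `|c| + 1 by have := normr_ge0 c; lra.
have he2 : 0 < e / (`|c| + 1) by apply: divr_gt0.
have [N h] := ha _ he2; exists N => n hn; have := h n hn.
rewrite normrM => hlt.
have : `|c| * `|a n| <= `|c| * (e / (`|c| + 1)).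
  by apply: ler_wpM2l; [exact: normr_ge0| exact: ltW].
have : `|c| * (e / (`|c| + 1)) < e.
  rewrite mulrA ltr_pdivrMr //; have := normr_ge0 c; nra.
lra.
Qed.

Lemma cvz_shiftS (a : nat -> R) : cvz (fun n => a n.+1) -> cvz a.
Proof. move=> ha e he; have [N h] := ha e he; exists N.+1 => -[|n] //= hn; exact: h. Qed.

Lemma cvz_Sshift (a : nat -> R) : cvz a -> cvz (fun n => a n.+1).
Proof. move=> ha e he; have [N h] := ha e he; exists N => n hn; apply: h; exact: leqW. Qed.

Record goodF (U : set_system nat) : Prop := GoodF {
  gF_proper : ProperFilter U;
  gF_tail : forall N, U [set n | (N <= n)%N];
  gF_ultra : forall A, U A \/ U (~` A) }.

Definition Ucv (U : set_system nat) (a : nat -> R) (l : R) :=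
  forall e, 0 < e -> U [set n | `|a n - l| < e].

Section GF.
Variable U : set_system nat.
Hypothesis hU : goodF U.

Lemma gFI A B : U A -> U B -> U (A `&` B).
Proof. have := gF_proper hU => hp; exact: filterI. Qed.
Lemma gFS (A B : set nat) : (forall n, A n -> B n) -> U A -> U B.
Proof. have := gF_proper hU => hp hAB; apply: filterS => n; exact: hAB. Qed.
Lemma gFT : U setT.
Proof. have := gF_proper hU => hp; exact: filterT. Qed.
Lemma gF_ex A : U A -> exists n, A n.
Proof.
have := gF_proper hU => hp hA; apply: contrapT => hne; apply: (filter_not_empty U).
suff -> : set0 = A by [].
rewrite predeqE => n; split => // hn; exfalso; apply: hne; by exists n.
Qed.

Lemma Ucv_unique a l1 l2 : Ucv U a l1 -> Ucv U a l2 -> l1 = l2.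
Proof.
move=> h1 h2; apply: contrapT => hne.
have hp : 0 < `|l1 - l2| / 2 by rewrite divr_gt0 // normr_gt0 subr_eq0; apply/eqP.
have [n [hn1 hn2]] := gF_ex (gFI (h1 _ hp) (h2 _ hp)).
have e : l1 - l2 = (l1 - a n) + (a n - l2) by ring.
have hh : `|l1 - l2| <= `|l1 - a n| + `|a n - l2| by rewrite {1}e; exact: ler_normD.
have e2 : `|l1 - a n| = `|a n - l1| by rewrite -normrN opprB.
move: hn1 hn2 => /= hn1 hn2; lra.
Qed.

Lemma Ucv_add a b l m : Ucv U a l -> Ucv U b m -> Ucv U (fun n => a n + b n) (l + m).
Proof.
move=> ha hb e he; have he2 : 0 < e / 2 by lra.
apply: gFS (gFI (ha _ he2) (hb _ he2)) => n [h1 h2] /=.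
have e1 : a n + b n - (l + m) = (a n - l) + (b n - m) by ring.
move: h1 h2 => /= h1 h2; rewrite e1; have := ler_normD (a n - l) (b n - m); lra.
Qed.

Lemma Ucv_scale c a l : Ucv U a l -> Ucv U (fun n => c * a n) (c * l).
Proof.
move=> ha e he; have hc : 0 < `|c| + 1 by have := normr_ge0 c; lra.
have he2 : 0 < e / (`|c| + 1) by apply: divr_gt0.
apply: gFS (ha _ he2) => n /= hlt.
rewrite -mulrBr normrM.
have : `|c| * `|a n - l| <= `|c| * (e / (`|c| + 1)).
  by apply: ler_wpM2l; [exact: normr_ge0| exact: ltW].
have : `|c| * (e / (`|c| + 1)) < e.
  rewrite mulrA ltr_pdivrMr //; have := normr_ge0 c; nra.
lra.
Qed.

Lemma Ucv_const c : Ucv U (fun _ => c) c.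
Proof. move=> e he; apply: gFS gFT => n _ /=; by rewrite subrr normr0. Qed.

Lemma Ucv_ext a b l : Ucv U a l -> (forall n, a n = b n) -> Ucv U b l.
Proof. move=> ha hab e he; apply: gFS (ha e he) => n /=; by rewrite hab. Qed.

Lemma Ucv_comb a b l m c d k (g : nat -> R) l' : Ucv U a l -> Ucv U b m ->
  (forall n, g n = c * a n + d * b n + k) -> l' = c * l + d * m + k -> Ucv U g l'.
Proof.
move=> ha hb hg ->; have := Ucv_add (Ucv_add (Ucv_scale c ha) (Ucv_scale d hb)) (Ucv_const k).
move=> h; apply: Ucv_ext h _ => n; by rewrite hg.
Qed.

Lemma cvz_Ucv a l : cvz (fun n => a n - l) -> Ucv U a l.
Proof. move=> ha e he; have [N hN] := ha e he; apply: gFS (gF_tail hU N) => n; exact: hN. Qed.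

Lemma Ucv_ge0 a l : (forall n, 0 <= a n) -> Ucv U a l -> 0 <= l.
Proof.
move=> ha hl; rewrite leNgt; apply/negP => hl0.
have [n hn] := gF_ex (hl (- l) ltac:(lra)).
have := ha n; move: hn; rewrite /=; have := ler_norm (a n - l); lra.
Qed.

Lemma Ucv_ex a M : (forall n, `|a n| <= M) -> exists l, Ucv U a l.
Proof.
move=> hM; set T := [set t | U [set n | t <= a n]].
have hT : has_sup T.
  split.
    exists (- M); rewrite /T /=; apply: gFS gFT => n _ /=; have := hM n; have := ler_norm (- a n); rewrite normrN; lra.
  exists M => t /= ht; rewrite leNgt; apply/negP => htM.
  have [n hn] := gF_ex ht; have := hM n; have := ler_norm (a n); move: hn => /=; lra.
exists (sup T) => e he.
have [t ht hlt] := sup_adherent he hT.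
have he2 : 0 < e / 2 by lra.
have hnot : ~ T (sup T + e / 2).
  move=> hT2; have := sup_upper_bound hT hT2; lra.
have hC : U (~` [set n | sup T + e / 2 <= a n]).
  by case: (gF_ultra hU [set n | sup T + e / 2 <= a n]).
apply: gFS (gFI ht hC) => n [/= h1 h2].
have h2' : a n < sup T + e / 2 by rewrite ltNge; apply/negP.
rewrite ltr_norml; apply/andP; split; lra.
Qed.

End GF.

Lemma goodF_exists (E : set nat) : (forall N, exists n, (N <= n)%N /\ E n) ->
  exists U, goodF U /\ U E.
Proof.
move=> hE.
set F := filter_from setT (fun N => [set n | (N <= n)%N /\ E n]).
have hF : ProperFilter F.
  apply: filter_from_proper.
    apply: filter_fromT_filter; first by exists 0%N.
    move=> i j; exists (maxn i j) => n [hn hEn]; split; split => //.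
      exact: leq_trans (leq_maxl _ _) hn.
    exact: leq_trans (leq_maxr _ _) hn.
  move=> i _; have [n [hn hEn]] := hE i; by exists n.
have [G [hG hFG]] := ultraFilterLemma hF.
exists G; split.
  split.
  - exact: ultra_proper.
  - move=> N; apply: hFG; exists N => // n [] //.
  - move=> A; exact: in_ultra_setVsetC.
apply: hFG; exists 0%N => // n [] //.
Qed.

End Seqs.
Lemma inv_cvz (R : realType) : cvz (fun j : nat => (j.+1%:R : R)^-1).
Proof.
move=> e he; exists (Num.trunc e^-1) => n hn.
have h1 := truncnS_gt e^-1.
have h2 : ((Num.trunc e^-1).+1%:R : R) <= n.+1%:R by rewrite ler_nat ltnS.
have hp : (0 : R) < n.+1%:R by rewrite ltr0n.
rewrite ger0_norm; last by rewrite invr_ge0 ltW.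
rewrite -(invrK e) ltf_pV2 ?posrE ?invr_gt0 //; lra.
Qed.

Lemma sqrt_lt_sq (R : realType) (v e : R) : 0 <= v -> 0 < e -> v < e * e -> Num.sqrt v < e.
Proof.
move=> hv he hve; have : Num.sqrt v < Num.sqrt (e ^+ 2) by rewrite ltr_sqrt ?expr2 // mulr_gt0.
by rewrite sqrtr_sqr gtr0_norm.
Qed.

Lemma sq_lt_sqrt (R : realType) (v e : R) : 0 <= v -> Num.sqrt v < e -> v < e * e.
Proof.
move=> hv hs; have hs0 := sqrtr_ge0 v; rewrite -(sqr_sqrtr hv) expr2; nra.
Qed.

Section Riesz.
Context (R : realType) (H : lmodType R) (I : hilbert H).
Local Notation ipp := (ip I).
Local Notation N := (Nn I).

Lemma ip_bound x h : `|ipp x h| <= (N x + N h) / 2.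
Proof.
have h1 := young I x h (ltr01 : (0:R) < 1).
have h2 := young I (- x) h (ltr01 : (0:R) < 1).
rewrite ipNl NnN invr1 !mul1r in h2; rewrite invr1 !mul1r in h1.
rewrite ler_norml; apply/andP; split; lra.
Qed.

Lemma para x y : N (x + y) + N (x - y) = 2 * N x + 2 * N y.
Proof. rewrite !Nn_expand /Nn !ipNl !ipNr; lra. Qed.

Lemma ip_cvz (s t : nat -> H) K : (forall n, N (t n) <= K) -> cvz (fun n => N (s n)) ->
  cvz (fun n => ipp (s n) (t n)).
Proof.
move=> hK hs e he.
have hK0 : 0 <= K by apply: le_trans (hK 0%N); exact: Nn_ge0.
have he2 : 0 < e * e / (K + 1) by apply: divr_gt0; [exact: mulr_gt0| lra].
have [M hM] := hs _ he2; exists M => n hn; apply: sq_lt => //.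
have h1 := CS I (s n) (t n); have h2 := hM n hn.
rewrite ger0_norm in h2; last exact: Nn_ge0.
have h3 : N (s n) * N (t n) <= N (s n) * K by apply: ler_wpM2l; [exact: Nn_ge0|exact: hK].
have h4 : N (s n) * K <= e * e / (K + 1) * K by apply: ler_wpM2r => //; exact: ltW.
have h5 : e * e / (K + 1) * K < e * e.
  rewrite mulrAC ltr_pdivrMr; last lra. have := mulr_gt0 he he; nra.
lra.
Qed.

Lemma wlim (U : set_system nat) (hU : goodF U) (s : nat -> H) K :
  (forall n, N (s n) <= K) -> exists sb, forall h, Ucv U (fun n => ipp (s n) h) (ipp sb h).
Proof.
move=> hK.
have hf : forall h, exists l, Ucv U (fun n => ipp (s n) h) l.
  move=> h; apply: (@Ucv_ex _ U hU _ ((K + N h) / 2)) => n.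
  apply: le_trans (ip_bound _ _) _; have := hK n; lra.
have [f hfl] := choice hf.
have flin : forall a h h', f (a *: h + h') = a * f h + f h'.
  move=> a h h'; apply: (Ucv_unique hU (hfl _)).
  have := Ucv_add hU (Ucv_scale hU a (hfl h)) (hfl h'). move=> hh.
  apply: (Ucv_ext hU hh) => n /=.
  by rewrite ipDr ipZr.
have fZ : forall a h, f (a *: h) = a * f h.
  move=> a h; have := flin a h 0; rewrite addr0 => ->.
  have := flin 1 0 0; rewrite scale1r addr0 mul1r => h0; have -> : f 0 = 0 by lra.
  by rewrite addr0.
have fD : forall h h', f (h + h') = f h + f h'.
  by move=> h h'; rewrite -[h]scale1r flin mul1r scale1r.
have fb : forall h, f h <= (K + N h) / 2.
  move=> h; suff : 0 <= (K + N h) / 2 - f h by lra.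
  apply: (Ucv_ge0 hU (a := fun n => (K + N h) / 2 - ipp (s n) h)).
    move=> n; have := ip_bound (s n) h; have := hK n; have := ler_norm (ipp (s n) h); lra.
  apply: (Ucv_comb hU (hfl h) (hfl h) (c := -1) (d := 0) (k := (K + N h) / 2)) => [n|]; ring.
pose Psi z := N z / 2 - f z.
have Psilb : forall z, - K / 2 <= Psi z by move=> z; rewrite /Psi; have := fb z; lra.
set E := [set Psi z | z in setT].
have hE : has_inf E by split; [exists (Psi 0), 0|exists (- K / 2) => _ [z _ <-]].
set m := inf E.
have mlb : forall z, m <= Psi z.
  move=> z; have hh := ge_inf (proj2 hE); apply: hh; by exists z.
have hz : forall j : nat, exists z, Psi z < m + (j.+1%:R)^-1.
  move=> j; have [_ [z _ <-] hz] := inf_adherent (ltac:(by rewrite invr_gt0 ltr0n) : 0 < (j.+1%:R : R)^-1) hE.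
  by exists z.
have [zs hzs] := choice hz.
have cauchy : forall i j, N (zs i - zs j) <= 4 * ((i.+1%:R)^-1 + (j.+1%:R)^-1).
  move=> i j; have hm := mlb (2^-1 *: (zs i + zs j)).
  have hp := para (zs i) (zs j).
  have hi := hzs i; have hj := hzs j.
  move: hm; rewrite /Psi fZ fD NnZ; move: hi hj; rewrite /Psi; clearbody m; move: (i.+1%:R^-1) (j.+1%:R^-1) => ei ej; lra.
have [xb hxb] : exists xb, (fun n => Num.sqrt (ipp (zs n - xb) (zs n - xb))) @ \oo --> (0 : R).
  apply: ip_complete => e he.
  have he2 : 0 < e * e / 8 by apply: divr_gt0 => //; exact: mulr_gt0.
  have [M hM] := inv_cvz he2.
  exists M => i j hi hj; apply: sqrt_lt_sq => //; first exact: Nn_ge0.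
  have := hM i hi; have := hM j hj; have := cauchy i j.
  rewrite !ger0_norm ?invr_ge0 ?ler0n // /Nn; move: (i.+1%:R^-1) (j.+1%:R^-1) => ei ej; lra.
have cz : cvz (fun n => N (zs n - xb)).
  move=> e he; move/cvgrPdist_lt: hxb.
  have he' : 0 < e / (e + 1) by apply: divr_gt0 => //; lra.
  move=> /(_ _ he') [M _ hM]; exists M => n hn; have := hM n hn.
  rewrite /= sub0r normrN ger0_norm ?sqrtr_ge0 // => hs.
  have := sq_lt_sqrt (Nn_ge0 I _) hs; rewrite ger0_norm ?Nn_ge0 // /Nn.
  have h1 : e / (e + 1) < 1 by rewrite ltr_pdivrMr; lra.
  have h2 : e / (e + 1) <= e by rewrite ler_pdivrMr; nra.
  have h0 := ltW he'; nra.
exists xb => h.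
have key : f h = ipp xb h.
  have ht : forall t, 0 <= t * (ipp xb h - f h) + t * t / 2 * N h.
    move=> t.
    apply: (Ucv_ge0 hU (a := fun j => t * (ipp (zs j) h - f h) + t * t / 2 * N h + (j.+1%:R)^-1)).
      move=> j; have := mlb (zs j + t *: h); have := hzs j.
      rewrite /Psi fD fZ Nn_expand NnZ ipZr; clearbody m; move: (j.+1%:R^-1) => ej; lra.
    have ha : Ucv U (fun j => ipp (zs j) h) (ipp xb h).
      apply: cvz_Ucv => //; apply: cvz_eq (ip_cvz (s := fun n => zs n - xb) (t := fun _ => h) (K := N h) _ cz) _.
        by move=> n.
      by move=> n; rewrite ipBl.
    have hb : Ucv U (fun j => (j.+1%:R : R)^-1) 0.
      by apply: cvz_Ucv => // e he; have [M hM] := inv_cvz he; exists M => n hn; rewrite subr0; exact: hM.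
    apply: (Ucv_comb hU ha hb (c := t) (d := 1) (k := - t * f h + t * t / 2 * N h)) => [n|]; ring.
  set c := ipp xb h - f h in ht *.
  have hNh := Nn_ge0 I h.
  have := ht (- c / (N h + 1)).
  have -> : - c / (N h + 1) * c + - c / (N h + 1) * (- c / (N h + 1)) / 2 * N h =
            - (c * c) * ((N h + 2) / (2 * ((N h + 1) * (N h + 1)))).
    by field; rewrite gt_eqF //; lra.
  have hq : 0 < (N h + 2) / (2 * ((N h + 1) * (N h + 1))).
    by apply: divr_gt0; [lra| apply: mulr_gt0; [lra| apply: mulr_gt0; lra]].
  move=> h0; have : c * c <= 0 by nra.
  move=> hcc; have : c = 0 by nra.
  rewrite /c => /eqP; rewrite subr_eq0 => /eqP ->; by [].
by rewrite -key; exact: hfl.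
Qed.

End Riesz.

Section Energy.
Context (R : realType) (H : lmodType R) (I : hilbert H).
Local Notation ipp := (ip I).
Local Notation N := (Nn I).

Lemma vec_eq (v1 v2 : H) : (forall t, ipp v1 t = ipp v2 t) -> v1 = v2.
Proof.
move=> h; apply: (subIr v2); rewrite subrr; apply: (@Nn_eq0 _ _ I).
by rewrite /Nn ipBl h subrr.
Qed.

Definition EnF (g lam L : R) (p q b D : H) :=
  g^-1 / 2 * N p + lam / 2 * N q - ipp p q - ipp p b + L / 2 * N D.
Definition kap1 (g lam L be : R) := (g^-1 - lam^-1 - 2 * L - be^-1) / 2.
Definition kap2 (lam be : R) := lam * lam / (2 * (2 * be + lam)).

Lemma energy_step (g lam L be : R) (p d q e b b' mb c D : H) :
  0 < g -> 0 < lam -> 0 < L -> 0 < be ->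
  0 <= ipp (p + d) (- (g^-1 *: d) - q - mb + b' - b - c) ->
  0 <= ipp (p + 2 *: d - lam *: e) (q + e) ->
  0 <= ipp (p + d) mb ->
  be * N c <= ipp p c ->
  N b <= L * L * N D ->
  EnF g lam L (p + d) (q + e) b' d + kap1 g lam L be * N d + kap2 lam be * N e
    <= EnF g lam L p q b D.
Proof.
move=> hg hl hL hb M2 M1 MB CC LB.
set mu := 2 * be * lam / (2 * be + lam).
have hmu : 0 < mu by rewrite /mu; apply: divr_gt0; [apply: mulr_gt0 => //; lra| lra].
have key : EnF g lam L p q b D - (EnF g lam L (p + d) (q + e) b' d + kap1 g lam L be * N d + kap2 lam be * N e)
   = ipp (p + d) (- (g^-1 *: d) - q - mb + b' - b - c) + ipp (p + 2 *: d - lam *: e) (q + e)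
     + ipp (p + d) mb + (ipp p c - be * N c) + be * N (c + (2 * be)^-1 *: d)
     + (2 * L)^-1 * N (L *: d + b) + (2 * mu)^-1 * N (d - mu *: e) + (2 * L)^-1 * (L * L * N D - N b).
  rewrite /EnF /kap1 /kap2 /Nn /mu !ipDl !ipDr !ipNl !ipNr !ipZl !ipZr.
  rewrite ?(ip_sym I (d) (p)) ?(ip_sym I (q) (p)) ?(ip_sym I (e) (p)) ?(ip_sym I (b) (p)) ?(ip_sym I (b') (p)) ?(ip_sym I (mb) (p)) ?(ip_sym I (c) (p)) ?(ip_sym I (D) (p)) ?(ip_sym I (q) (d)) ?(ip_sym I (e) (d)) ?(ip_sym I (b) (d)) ?(ip_sym I (b') (d)) ?(ip_sym I (mb) (d)) ?(ip_sym I (c) (d)) ?(ip_sym I (D) (d)) ?(ip_sym I (e) (q)) ?(ip_sym I (b) (q)) ?(ip_sym I (b') (q)) ?(ip_sym I (mb) (q)) ?(ip_sym I (c) (q)) ?(ip_sym I (D) (q)) ?(ip_sym I (b) (e)) ?(ip_sym I (b') (e)) ?(ip_sym I (mb) (e)) ?(ip_sym I (c) (e)) ?(ip_sym I (D) (e)) ?(ip_sym I (b') (b)) ?(ip_sym I (mb) (b)) ?(ip_sym I (c) (b)) ?(ip_sym I (D) (b)) ?(ip_sym I (mb) (b')) ?(ip_sym I (c) (b')) ?(ip_sym I (D) (b')) ?(ip_sym I (c) (mb)) ?(ip_sym I (D) (mb)) ?(ip_sym I (D) (c)).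
  have h1 : L != 0 by rewrite gt_eqF.
  have h2 : 2 * be + lam != 0 by rewrite gt_eqF //; lra.
  have h3 : lam != 0 by rewrite gt_eqF.
  have h4 : be != 0 by rewrite gt_eqF.
  have h5 : g != 0 by rewrite gt_eqF.
  by field; rewrite h1 h2 h3 h4 h5.
rewrite -subr_ge0 key.
have t1 := mulr_ge0 (ltW hb) (Nn_ge0 I (c + (2 * be)^-1 *: d)).
have t2 := mulr_ge0 (ltW (ltac:(by rewrite invr_gt0; lra) : 0 < (2 * L)^-1)) (Nn_ge0 I (L *: d + b)).
have t3 := mulr_ge0 (ltW (ltac:(by rewrite invr_gt0; lra) : 0 < (2 * mu)^-1)) (Nn_ge0 I (d - mu *: e)).
have t4 : 0 <= (2 * L)^-1 * (L * L * N D - N b).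
  apply: mulr_ge0; [rewrite invr_ge0; lra| lra].
lra.
Qed.
End Energy.
Section Energy2.
Context (R : realType) (H : lmodType R) (I : hilbert H).
Local Notation ipp := (ip I).
Local Notation N := (Nn I).

Definition VF (g lam : R) (p q : H) := g^-1 / 2 * N p + lam / 2 * N q - ipp p q.
Definition c1F (g lam L be : R) := (g^-1 - L - lam^-1 - (2 * be)^-1) / 2.

Lemma energy_lb (g lam L be : R) (p q b D : H) :
  0 < g -> 0 < lam -> 0 < L -> 0 < be ->
  N b <= L * L * N D ->
  c1F g lam L be * N p + kap2 lam be * N q <= EnF I g lam L p q b D.
Proof.
move=> hg hl hL hb LB.
set mu := 2 * be * lam / (2 * be + lam).
have hmu : 0 < mu by rewrite /mu; apply: divr_gt0; [apply: mulr_gt0 => //; lra| lra].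
have key : EnF I g lam L p q b D - (c1F g lam L be * N p + kap2 lam be * N q)
   = (2 * L)^-1 * N (L *: p - b) + (2 * L)^-1 * (L * L * N D - N b) + (2 * mu)^-1 * N (p - mu *: q).
  rewrite /EnF /c1F /kap2 /Nn /mu !ipDl !ipDr !ipNl !ipNr !ipZl !ipZr.
  rewrite ?(ip_sym I (q) (p)) ?(ip_sym I (b) (p)) ?(ip_sym I (D) (p)) ?(ip_sym I (b) (q)) ?(ip_sym I (D) (q)) ?(ip_sym I (D) (b)).
  have h1 : L != 0 by rewrite gt_eqF.
  have h2 : 2 * be + lam != 0 by rewrite gt_eqF //; lra.
  have h3 : lam != 0 by rewrite gt_eqF.
  have h4 : be != 0 by rewrite gt_eqF.
  have h5 : g != 0 by rewrite gt_eqF.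
  by field; rewrite h1 h2 h3 h4 h5.
rewrite -subr_ge0 key.
have t2 := mulr_ge0 (ltW (ltac:(by rewrite invr_gt0; lra) : 0 < (2 * L)^-1)) (Nn_ge0 I (L *: p - b)).
have t3 := mulr_ge0 (ltW (ltac:(by rewrite invr_gt0; lra) : 0 < (2 * mu)^-1)) (Nn_ge0 I (p - mu *: q)).
have t4 : 0 <= (2 * L)^-1 * (L * L * N D - N b).
  apply: mulr_ge0; [rewrite invr_ge0; lra| lra].
lra.
Qed.

Lemma EnF_VF g lam L p q b D : EnF I g lam L p q b D = VF g lam p q - ipp p b + L / 2 * N D.
Proof. by rewrite /EnF /VF. Qed.

End Energy2.

Lemma mono_le (R : realType) (a : nat -> R) : (forall n, a n.+1 <= a n) -> forall n m, (n <= m)%N -> a m <= a n.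
Proof.
move=> ha n m /subnKC <-; elim: (m - n)%N => [|k ih]; first by rewrite addn0.
by rewrite addnS; apply: le_trans (ha _) ih.
Qed.

Lemma mono_cv (R : realType) (a : nat -> R) : (forall n, a n.+1 <= a n) -> (forall n, 0 <= a n) ->
  exists l, cvz (fun n => a n - l).
Proof.
move=> ha h0.
have hE : has_inf (range a) by split; [exists (a 0%N), 0%N| exists 0 => _ [n _ <-]].
exists (inf (range a)) => e he.
have [_ [N _ <-] hN] := inf_adherent he hE.
exists N => n hn.
have h1 := mono_le ha hn.
have h2 : inf (range a) <= a n by have hh := ge_inf (proj2 hE); apply: hh; exists n.
rewrite ger0_norm; lra.
Qed.
Lemma le_divl (R : realType) (k a b : R) : 0 < k -> k * a <= b -> a <= k^-1 * b.
Proof. move=> hk h; by rewrite -(ler_pM2l hk) mulrA divff ?gt_eqF // mul1r. Qed.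

Section Idents.
Context (R : realType) (H : lmodType R) (I : hilbert H).
Local Notation ipp := (ip I).
Local Notation N := (Nn I).

Lemma S_ident (yp xq up a D1 w1 v1 w2 v2 w3 D3 : H) :
  ipp (yp - w1) (up - v1) + ipp (xq - w2) (a - v2) + ipp (xq - w3) (D1 - D3)
  = ipp (yp - xq) (up - v1) + ipp (a + up + D1) (xq - w2) + ipp xq (- v1 - v2 - D3)
    + ipp up (w2 - w1) + ipp D1 (w2 - w3) + (ipp w1 v1 + ipp w2 v2 + ipp w3 D3).
Proof.
rewrite !(ipDl, ipNl, ipDr, ipNr).
rewrite ?(ip_sym I (xq) (yp)) ?(ip_sym I (up) (yp)) ?(ip_sym I (a) (yp)) ?(ip_sym I (D1) (yp)) ?(ip_sym I (w1) (yp)) ?(ip_sym I (v1) (yp)) ?(ip_sym I (w2) (yp)) ?(ip_sym I (v2) (yp)) ?(ip_sym I (w3) (yp)) ?(ip_sym I (D3) (yp)) ?(ip_sym I (up) (xq)) ?(ip_sym I (a) (xq)) ?(ip_sym I (D1) (xq)) ?(ip_sym I (w1) (xq)) ?(ip_sym I (v1) (xq)) ?(ip_sym I (w2) (xq)) ?(ip_sym I (v2) (xq)) ?(ip_sym I (w3) (xq)) ?(ip_sym I (D3) (xq)) ?(ip_sym I (a) (up)) ?(ip_sym I (D1) (up)) ?(ip_sym I (w1) (up)) ?(ip_sym I (v1) (up)) ?(ip_sym I (w2) (up)) ?(ip_sym I (v2) (up)) ?(ip_sym I (w3) (up)) ?(ip_sym I (D3) (up)) ?(ip_sym I (D1) (a))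 ?(ip_sym I (w1) (a)) ?(ip_sym I (v1) (a)) ?(ip_sym I (w2) (a)) ?(ip_sym I (v2) (a)) ?(ip_sym I (w3) (a)) ?(ip_sym I (D3) (a)) ?(ip_sym I (w1) (D1)) ?(ip_sym I (v1) (D1)) ?(ip_sym I (w2) (D1)) ?(ip_sym I (v2) (D1)) ?(ip_sym I (w3) (D1)) ?(ip_sym I (D3) (D1)) ?(ip_sym I (v1) (w1)) ?(ip_sym I (w2) (w1)) ?(ip_sym I (v2) (w1)) ?(ip_sym I (w3) (w1)) ?(ip_sym I (D3) (w1)) ?(ip_sym I (w2) (v1)) ?(ip_sym I (v2) (v1)) ?(ip_sym I (w3) (v1)) ?(ip_sym I (D3) (v1)) ?(ip_sym I (v2) (w2)) ?(ip_sym I (w3) (w2)) ?(ip_sym I (D3) (w2)) ?(ip_sym I (w3) (v2)) ?(ip_sym I (D3) (v2)) ?(ip_sym I (D3) (w3)).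
ring.
Qed.

Lemma Phi_ident (xi om de w1 v1 w2 v2 w3 D3 : H) :
  0 + 0 + ipp xi (- v1 - v2 - D3) + ipp om (w2 - w1) + ipp de (w2 - w3) + (ipp w1 v1 + ipp w2 v2 + ipp w3 D3)
  = ipp (xi - w1) (om - v1) + ipp (xi - w2) (- (om + de) - v2) + ipp (xi - w3) (de - D3).
Proof.
rewrite !(ipDl, ipNl, ipDr, ipNr).
rewrite ?(ip_sym I (om) (xi)) ?(ip_sym I (de) (xi)) ?(ip_sym I (w1) (xi)) ?(ip_sym I (v1) (xi)) ?(ip_sym I (w2) (xi)) ?(ip_sym I (v2) (xi)) ?(ip_sym I (w3) (xi)) ?(ip_sym I (D3) (xi)) ?(ip_sym I (de) (om)) ?(ip_sym I (w1) (om)) ?(ip_sym I (v1) (om)) ?(ip_sym I (w2) (om)) ?(ip_sym I (v2) (om)) ?(ip_sym I (w3) (om)) ?(ip_sym I (D3) (om)) ?(ip_sym I (w1) (de)) ?(ip_sym I (v1) (de)) ?(ip_sym I (w2) (de)) ?(ip_sym I (v2) (de)) ?(ip_sym I (w3) (de)) ?(ip_sym I (D3) (de)) ?(ip_sym I (v1) (w1)) ?(ip_sym I (w2) (w1)) ?(ip_sym I (v2) (w1)) ?(ip_sym I (w3) (w1)) ?(ip_sym I (D3) (w1)) ?(ip_sym I (w2) (v1)) ?(ip_sym I (v2) (v1)) ?(ip_sym I (w3) (v1)) ?(ip_sym I (D3) (v1)) ?(ip_sym I (v2) (w2)) ?(ip_sym I (w3) (w2)) ?(ip_sym I (D3) (w2))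 ?(ip_sym I (w3) (v2)) ?(ip_sym I (D3) (v2)) ?(ip_sym I (D3) (w3)).
ring.
Qed.

Lemma Gident (g lam : R) (v w p0 q0 p1 q1 : H) :
  VF I g lam (v - p0) (w - q0) - VF I g lam (v - p1) (w - q1)
  = ipp v ((q0 - q1) - g^-1 *: (p0 - p1)) + ipp w ((p0 - p1) - lam *: (q0 - q1))
    + (VF I g lam p0 q0 - VF I g lam p1 q1).
Proof.
rewrite /VF /Nn !(ipDl, ipNl, ipDr, ipNr, ipZl, ipZr).
rewrite ?(ip_sym I (w) (v)) ?(ip_sym I (p0) (v)) ?(ip_sym I (q0) (v)) ?(ip_sym I (p1) (v)) ?(ip_sym I (q1) (v)) ?(ip_sym I (p0) (w)) ?(ip_sym I (q0) (w)) ?(ip_sym I (p1) (w)) ?(ip_sym I (q1) (w)) ?(ip_sym I (q0) (p0)) ?(ip_sym I (p1) (p0)) ?(ip_sym I (q1) (p0)) ?(ip_sym I (p1) (q0)) ?(ip_sym I (q1) (q0)) ?(ip_sym I (q1) (p1)).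
by move: (g^-1) => gi; field.
Qed.

Lemma ip_split_gen (p q r : H) : ipp (p - q) (q - r) = - N (p - q) + ipp (p - q) (p - r).
Proof. rewrite /Nn !(ipDl, ipNl, ipDr, ipNr). rewrite ?(ip_sym I (q) (p)) ?(ip_sym I (r) (p)) ?(ip_sym I (r) (q)). ring. Qed.

End Idents.
Section Algo.
Context (R : realType) (H : lmodType R) (I : hilbert H)
  (A1 A2 : H -> H -> Prop) (B C : H -> H) (L beta lambda gamma : R)
  (x y u : nat -> H) (xm1 : H).
Context (hA1 : maximally_monotone I A1) (hA2 : maximally_monotone I A2)
  (hB : monotone_fun I B) (hL : 0 < L) (hLip : L_lipschitz I L B)
  (hbe : 0 < beta) (hC : cocoercive I beta C)
  (hzer : exists z, zer4 A1 A2 B C z)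
  (hlam : 0 < lambda) (hg : 0 < gamma)
  (hgam : gamma < lambda * beta / (beta + lambda * (2 * beta * L + 1)))
  (hx : forall n : nat,
     resolvent gamma A2
       (x n - gamma *: u n - gamma *: (2 *: B (x n) - B (xprev x xm1 n)) - gamma *: C (x n))
       (x n.+1))
  (hy : forall n : nat,
     resolvent lambda A1 (2 *: x n.+1 - x n + lambda *: u n) (y n.+1))
  (hu : forall n : nat, u n.+1 = u n + lambda^-1 *: (2 *: x n.+1 - x n - y n.+1)).

Local Notation ipp := (ip I).
Local Notation N := (Nn I).
Local Notation xp := (xprev x xm1).

Lemma lipN v v' : N (B v - B v') <= L * L * N (v - v').
Proof.
have := hLip v v'; rewrite /hnorm => h.
have s1 := sqrtr_ge0 (ipp (B v - B v') (B v - B v')).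
have s2 := sqrtr_ge0 (ipp (v - v') (v - v')).
have e1 := sqr_sqrtr (Nn_ge0 I (B v - B v')).
have e2 := sqr_sqrtr (Nn_ge0 I (v - v')).
rewrite /Nn in e1 e2 *; rewrite -e1 -e2 !expr2.
move: h s1 s2; move: (Num.sqrt _) (Num.sqrt _) => a b h s1 s2; nra.
Qed.

Lemma cocN v v' : beta * N (C v - C v') <= ipp (v - v') (C v - C v').
Proof. have := hC v v'; rewrite /hnorm sqr_sqrtr //; exact: Nn_ge0. Qed.

Lemma CLip v v' : beta * beta * N (C v - C v') <= N (v - v').
Proof.
have h1 := cocN v v'.
have h2 := young I (v - v') (C v - C v') (ltac:(by rewrite invr_gt0) : 0 < beta^-1).
rewrite invrK in h2.
have h3 : beta * beta^-1 = 1 by rewrite divff // gt_eqF.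
have hN := Nn_ge0 I (C v - C v').
have hN' := Nn_ge0 I (v - v').
have : beta * N (C v - C v') <= beta^-1 * N (v - v') by lra.
move=> h4; have := ler_wpM2l (ltW hbe) h4; rewrite !mulrA h3 mul1r; lra.
Qed.

Definition Dop v := B v + C v.
Definition K2 := 2 * (L * L) + 2 / (beta * beta).

Lemma K2_gt0 : 0 < K2.
Proof. rewrite /K2; have : 0 < 2 / (beta * beta) by apply: divr_gt0 => //; apply: mulr_gt0. nra. Qed.

Lemma DLip v v' : N (Dop v - Dop v') <= K2 * N (v - v').
Proof.
have e : Dop v - Dop v' = (B v - B v') + (C v - C v').
  apply: (@vec_eq _ _ I) => t; rewrite /Dop !ipDl !ipNl !ipDl; lra.
rewrite e; apply: le_trans (Nn_add2 _ _ _) _.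
have h1 := lipN v v'; have h2 := CLip v v'.
have hbb : 0 < beta * beta by apply: mulr_gt0.
have h3 : N (C v - C v') <= N (v - v') / (beta * beta) by rewrite ler_pdivlMr // mulrC.
rewrite /K2; have := Nn_ge0 I (v - v'); lra.
Qed.

Lemma Dmono v v' : 0 <= ipp (v - v') (Dop v - Dop v').
Proof.
have h1 := hB (erefl (B v)) (erefl (B v')).
have h2 := cocN v v'.
have h3 := mulr_ge0 (ltW hbe) (Nn_ge0 I (C v - C v')).
have e : ipp (v - v') (Dop v - Dop v') = ipp (v - v') (B v - B v') + ipp (v - v') (C v - C v').
  rewrite /Dop !ipBr !ipDr; lra.
rewrite e; lra.
Qed.

Definition zarg n := x n - gamma *: u n - gamma *: (2 *: B (x n) - B (xp n)) - gamma *: C (x n).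
Definition a2 n := gamma^-1 *: (zarg n - x n.+1).

Lemma A2pt n : A2 (x n.+1) (a2 n).
Proof.
have [a [ha e]] := hx n.
suff -> : a2 n = a by [].
rewrite /a2 /zarg e; apply: (@vec_eq _ _ I) => t; rewrite !ipZl !ipDl !ipNl !ipZl.
by field; rewrite gt_eqF.
Qed.

Lemma A1pt n : A1 (y n.+1) (u n.+1).
Proof.
have [a [ha e]] := hy n.
suff -> : u n.+1 = a by [].
apply: (@vec_eq _ _ I) => t; have et := congr1 (fun v => ipp v t) e; rewrite /= in et.
rewrite hu; rewrite !ipDl !ipNl !ipZl in et *; rewrite !ipDl !ipNl !ipZl.
have hl0 : lambda != 0 by rewrite gt_eqF.
have eA : lambda * ipp a t = 2 * ipp (x n.+1) t - ipp (x n) t + lambda * ipp (u n) t - ipp (y n.+1) t by lra.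
rewrite (_ : ipp a t = lambda^-1 * (lambda * ipp a t)); last by field.
rewrite eA; by field.
Qed.

Definition Sol z w := A1 z w /\ A2 z (- (w + B z + C z)).
Definition En z w n := EnF I gamma lambda L (x n - z) (u n - w) (B (x n) - B (xp n)) (x n - xp n).
Definition k1 := kap1 gamma lambda L beta.
Definition k2 := kap2 lambda beta.
Definition c1 := c1F gamma lambda L beta.

Lemma k1_gt0 : 0 < k1.
Proof.
have hD : 0 < beta + lambda * (2 * beta * L + 1).
  have h0 : 0 < lambda * (2 * beta * L + 1).
    apply: mulr_gt0 => //; have := mulr_gt0 hbe hL; lra.
  apply: addr_gt0 => //.
have h := hgam; rewrite ltr_pdivlMr // in h.
rewrite /k1 /kap1.
have -> : (gamma^-1 - lambda^-1 - 2 * L - beta^-1) / 2 =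
   (lambda * beta - gamma * (beta + lambda * (2 * beta * L + 1))) / (2 * (gamma * lambda * beta)).
  by field; rewrite !gt_eqF.
apply: divr_gt0; first lra.
have := mulr_gt0 (mulr_gt0 hg hlam) hbe; lra.
Qed.

Lemma k2_gt0 : 0 < k2.
Proof. rewrite /k2 /kap2; apply: divr_gt0; first exact: mulr_gt0. apply: mulr_gt0; [lra| exact: addr_gt0 (mulr_gt0 _ hbe) hlam]. Qed.

Lemma c1_gt0 : 0 < c1.
Proof.
have e : c1 = k1 + (L + beta^-1 / 2) / 2.
  by rewrite /c1 /c1F /k1 /kap1; field; rewrite !gt_eqF.
rewrite e; apply: addr_gt0; first exact: k1_gt0.
apply: divr_gt0 => //; apply: addr_gt0 => //; apply: divr_gt0 => //; by rewrite invr_gt0.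
Qed.

Lemma step z w n : Sol z w ->
  En z w n.+1 + k1 * N (x n.+1 - x n) + k2 * N (u n.+1 - u n) <= En z w n.
Proof.
move=> [hz1 hz2].
have e1 : x n.+1 - z = (x n - z) + (x n.+1 - x n).
  by apply: (@vec_eq _ _ I) => t; rewrite !ipDl !ipNl; lra.
have e2 : u n.+1 - w = (u n - w) + (u n.+1 - u n).
  by apply: (@vec_eq _ _ I) => t; rewrite !ipDl !ipNl; lra.
rewrite /En /= e1 e2 /k1 /k2.
apply: (energy_step (mb := B (x n.+1) - B z) (c := C (x n) - C z)) => //.
- have := hA2.1 _ _ _ _ (A2pt n) hz2.
  rewrite e1.
  have -> : a2 n - - (w + B z + C z) = - (gamma^-1 *: (x n.+1 - x n)) - (u n - w)
        - (B (x n.+1) - B z) + (B (x n.+1) - B (x n)) - (B (x n) - B (xp n)) - (C (x n) - C z).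
    rewrite /a2 /zarg; apply: (@vec_eq _ _ I) => t; rewrite !(ipDl, ipNl, ipZl).
    by field; rewrite gt_eqF.
  by [].
- have := hA1.1 _ _ _ _ (A1pt n) hz1.
  rewrite e2.
  have -> : y n.+1 - z = x n - z + 2 *: (x n.+1 - x n) - lambda *: (u n.+1 - u n).
    rewrite hu; apply: (@vec_eq _ _ I) => t; rewrite !(ipDl, ipNl, ipZl).
    by field; rewrite gt_eqF.
  by [].
- have := hB (erefl (B (x n.+1))) (erefl (B z)); by rewrite e1.
- exact: cocN.
- exact: lipN.
Qed.

Lemma En_lb z w n : c1 * N (x n - z) + k2 * N (u n - w) <= En z w n.
Proof. by apply: energy_lb => //; exact: lipN. Qed.

Lemma En_ge0 z w n : 0 <= En z w n.
Proof.
have := En_lb z w n; have := mulr_ge0 (ltW c1_gt0) (Nn_ge0 I (x n - z)).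
have := mulr_ge0 (ltW k2_gt0) (Nn_ge0 I (u n - w)); lra.
Qed.

Lemma En_mono z w : Sol z w -> forall n, En z w n.+1 <= En z w n.
Proof.
move=> hs n; have := step n hs.
have := mulr_ge0 (ltW k1_gt0) (Nn_ge0 I (x n.+1 - x n)).
have := mulr_ge0 (ltW k2_gt0) (Nn_ge0 I (u n.+1 - u n)); lra.
Qed.

Lemma sol0 : exists z w, Sol z w.
Proof.
have [z [a1 [a2' [h1 [h2 e]]]]] := hzer.
exists z, a1; split => //.
suff -> : - (a1 + B z + C z) = a2' by [].
apply: (@vec_eq _ _ I) => t; have et := congr1 (fun v => ipp v t) e; rewrite /= in et.
rewrite !ipNl !ipDl in et *; rewrite ip0l in et; lra.
Qed.

Lemma En_le0 z w : Sol z w -> forall n, En z w n <= En z w 0.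
Proof. move=> hs n; exact: (mono_le (En_mono hs) (leq0n n)). Qed.

Lemma bound_xu : exists K, forall n, N (x n) <= K /\ N (u n) <= K.
Proof.
have [z [w hs]] := sol0.
have hc1 := c1_gt0; have hk2 := k2_gt0.
exists (2 * (En z w 0 / c1) + 2 * N z + 2 * (En z w 0 / k2) + 2 * N w) => n.
have h0 := En_le0 hs n; have hlb := En_lb z w n.
have hx0 := mulr_ge0 (ltW hc1) (Nn_ge0 I (x n - z)).
have hu0 := mulr_ge0 (ltW hk2) (Nn_ge0 I (u n - w)).
have hxz : N (x n - z) <= En z w 0 / c1 by rewrite ler_pdivlMr // mulrC; lra.
have hux : N (u n - w) <= En z w 0 / k2 by rewrite ler_pdivlMr // mulrC; lra.
have b1 := Nn_add2 I (x n - z) z; have b2 := Nn_add2 I (u n - w) w.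
rewrite subrK in b1; rewrite subrK in b2.
have := Nn_ge0 I z; have := Nn_ge0 I w; have := Nn_ge0 I (x n - z); have := Nn_ge0 I (u n - w).
move: hxz hux; move: (En z w 0 / c1) (En z w 0 / k2) => a b.
move=> *; split; lra.
Qed.

Lemma En_cv z w : Sol z w -> exists l, cvz (fun n => En z w n - l).
Proof. move=> hs; apply: mono_cv; [exact: En_mono | exact: En_ge0]. Qed.

Lemma dnull : cvz (fun n => N (x n.+1 - x n)) /\ cvz (fun n => N (u n.+1 - u n)).
Proof.
have [z [w hs]] := sol0.
have [l hl] := En_cv hs.
have hd : cvz (fun n => En z w n - En z w n.+1).
  apply: cvz_eq (cvz_add hl (cvz_scale (-1) (cvz_Sshift hl))) _ => n /=; ring.
have hk1 := k1_gt0; have hk2 := k2_gt0.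
split.
- apply: cvz_le (cvz_scale k1^-1 hd) => n.
  rewrite ger0_norm ?Nn_ge0 //; apply: le_divl => //.
  have := step n hs; have := mulr_ge0 (ltW hk2) (Nn_ge0 I (u n.+1 - u n)); lra.
- apply: cvz_le (cvz_scale k2^-1 hd) => n.
  rewrite ger0_norm ?Nn_ge0 //; apply: le_divl => //.
  have := step n hs; have := mulr_ge0 (ltW hk1) (Nn_ge0 I (x n.+1 - x n)); lra.
Qed.

Lemma Dnull : cvz (fun n => N (x n - xp n)).
Proof. apply: cvz_shiftS; exact: dnull.1. Qed.

Lemma bnull : cvz (fun n => N (B (x n) - B (xp n))).
Proof.
apply: cvz_le (cvz_scale (L * L) Dnull) => n; rewrite ger0_norm ?Nn_ge0 //; exact: lipN.
Qed.

Lemma V_cv z w : Sol z w -> exists l, cvz (fun n => VF I gamma lambda (x n - z) (u n - w) - l).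
Proof.
move=> hs; have [l hl] := En_cv hs; exists l.
have [K hK] := bound_xu.
have hp : cvz (fun n => ipp (x n - z) (B (x n) - B (xp n))).
  apply: cvz_eq (ip_cvz (s := fun n => B (x n) - B (xp n)) (t := fun n => x n - z) (K := 2 * K + 2 * N z) _ bnull) _.
  + move=> n; have := Nn_add2 I (x n) (- z); rewrite NnN; have := (hK n).1; lra.
  + by move=> n; rewrite ip_sym.
apply: cvz_eq (cvz_add (cvz_add hl hp) (cvz_scale (- (L / 2)) Dnull)) _ => n.
rewrite /En EnF_VF; ring.
Qed.

Lemma Dop_bound : exists K', forall n, N (Dop (x n.+1)) <= K'.
Proof.
have [K hK] := bound_xu.
exists (2 * (K2 * K) + 2 * N (Dop 0)) => n.
have b := Nn_add2 I (Dop (x n.+1) - Dop 0) (Dop 0); rewrite subrK in b.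
have := DLip (x n.+1) 0; rewrite subr0 => h.
have := ler_wpM2l (ltW K2_gt0) (hK n.+1).1 => h2.
lra.
Qed.

Lemma CLip2 v v' : N (C v - C v') <= beta^-1 * beta^-1 * N (v - v').
Proof.
rewrite -mulrA; apply: le_divl => //; apply: le_divl => //; rewrite mulrA; exact: CLip.
Qed.

Lemma snull : cvz (fun n => N (y n.+1 - x n.+1)).
Proof.
have [hdx hdu] := dnull.
apply: cvz_le (cvz_add (cvz_scale 2 hdx) (cvz_scale (2 * (lambda * lambda)) hdu)) => n.
have e : y n.+1 - x n.+1 = (x n.+1 - x n) + (- lambda) *: (u n.+1 - u n).
  rewrite hu; apply: (@vec_eq _ _ I) => t; rewrite !(ipDl, ipNl, ipZl); by field; rewrite gt_eqF.
rewrite ger0_norm ?Nn_ge0 // e; apply: le_trans (Nn_add2 _ _ _) _; rewrite NnZ.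
have := Nn_ge0 I (u n.+1 - u n); lra.
Qed.

Lemma rnull : cvz (fun n => N (a2 n + u n.+1 + Dop (x n.+1))).
Proof.
have [hdx hdu] := dnull.
set T1 := fun n => (- gamma^-1) *: (x n.+1 - x n).
set T2 := fun n => u n.+1 - u n.
set T3 := fun n => B (x n.+1) - B (x n).
set T4 := fun n => - (B (x n) - B (xp n)).
set T5 := fun n => C (x n.+1) - C (x n).
have e : forall n, a2 n + u n.+1 + Dop (x n.+1) = T1 n + T2 n + T3 n + T4 n + T5 n.
  move=> n; rewrite /a2 /zarg /Dop /T1 /T2 /T3 /T4 /T5.
  apply: (@vec_eq _ _ I) => t; rewrite !(ipDl, ipNl, ipZl); by field; rewrite gt_eqF.
have bd : forall n, N (a2 n + u n.+1 + Dop (x n.+1)) <=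
   16 * N (T1 n) + 16 * N (T2 n) + 8 * N (T3 n) + 4 * N (T4 n) + 2 * N (T5 n).
  move=> n; rewrite e.
  have h1 := Nn_add2 I (T1 n + T2 n + T3 n + T4 n) (T5 n).
  have h2 := Nn_add2 I (T1 n + T2 n + T3 n) (T4 n).
  have h3 := Nn_add2 I (T1 n + T2 n) (T3 n).
  have h4 := Nn_add2 I (T1 n) (T2 n).
  lra.
apply: (@cvz_le _ (fun n => 16 * (gamma^-1 * gamma^-1) * N (x n.+1 - x n) + 16 * N (u n.+1 - u n)
     + 8 * (L * L) * N (x n.+1 - x n) + 4 * (L * L) * N (x n - xp n) + 2 * (beta^-1 * beta^-1) * N (x n.+1 - x n))).
- move=> n; rewrite ger0_norm ?Nn_ge0 //; apply: le_trans (bd n) _.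
  rewrite /T1 /T2 /T3 /T4 /T5 NnZ NnN.
  have h3 := lipN (x n.+1) (x n); have h4 := lipN (x n) (xp n); have h5 := CLip2 (x n.+1) (x n).
  move: h3 h4 h5; move: (gamma^-1) (beta^-1) => gi bi.
  move=> h3 h4 h5; have := Nn_ge0 I (x n.+1 - x n); lra.
- apply: cvz_add; last by apply: cvz_scale.
  apply: cvz_add; last by apply: cvz_scale; exact: Dnull.
  apply: cvz_add; last by apply: cvz_scale.
  apply: cvz_add; last by apply: cvz_scale.
  by apply: cvz_scale.
Qed.

Lemma Dlemma xi de : (forall w, 0 <= ipp (xi - w) (de - Dop w)) -> de = Dop xi.
Proof.
move=> h.
have hK := K2_gt0.
pose t := (K2 + 1)^-1.
have ht : 0 < t by rewrite /t invr_gt0; lra.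
pose hh := Dop xi - de.
have e1 : xi - (xi - t *: hh) = t *: hh.
  by apply: (@vec_eq _ _ I) => v; rewrite !(ipDl, ipNl, ipZl); ring.
have h0 := h (xi - t *: hh); rewrite e1 ipZl in h0.
have hLp := DLip xi (xi - t *: hh); rewrite e1 NnZ in hLp.
have hyo := young I hh (Dop xi - Dop (xi - t *: hh)) ltr01; rewrite invr1 !mul1r in hyo.
have hs := ip_split_gen I (Dop xi) de (Dop (xi - t *: hh)).
rewrite -/hh in hs.
have hq : K2 * (t * t) < 1.
  have -> : K2 * (t * t) = K2 / ((K2 + 1) * (K2 + 1)) by rewrite /t; field; rewrite gt_eqF //; lra.
  rewrite ltr_pdivrMr; last by apply: mulr_gt0; lra.
  nra.
have hN := Nn_ge0 I hh.
have h1 : 0 <= ipp hh (de - Dop (xi - t *: hh)).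
  by move: h0; rewrite pmulr_rge0.
rewrite hs in h1; rewrite mulrA in hLp.
have hNg := Nn_ge0 I (Dop xi - Dop (xi - t *: hh)).
move: hLp hyo h1 hq; move: (ipp hh (Dop xi - Dop (xi - t *: hh))) (N (Dop xi - Dop (xi - t *: hh))) (K2 * (t * t)) => a g q.
move=> hLp hyo h1 hq.
have hN0 : N hh = 0.
  have : N hh * (1 - q) <= 0 by nra.
  move=> h2; apply/eqP; rewrite eq_le hN andbT.
  by move: h2; rewrite pmulr_lle0 //; lra.
have := Nn_eq0 hN0; rewrite /hh => /eqP; rewrite subr_eq0 => /eqP ->; by [].
Qed.

Lemma cluster U : goodF U -> exists xi om, Sol xi om /\
  (forall h, Ucv U (fun n => ipp (x n) h) (ipp xi h)) /\
  (forall h, Ucv U (fun n => ipp (u n) h) (ipp om h)).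
Proof.
move=> hU.
have [K hK] := bound_xu.
have [K' hK'] := Dop_bound.
have [hdx hdu] := dnull.
have [xi hxi] := wlim hU (s := fun n => x n.+1) (K := K) (fun n => (hK n.+1).1).
have [om hom] := wlim hU (s := fun n => u n.+1) (K := K) (fun n => (hK n.+1).2).
have [de hde] := wlim hU (s := fun n => Dop (x n.+1)) hK'.
have hPhi : forall w1 v1 w2 v2 w3, A1 w1 v1 -> A2 w2 v2 ->
   0 <= ipp (xi - w1) (om - v1) + ipp (xi - w2) (- (om + de) - v2) + ipp (xi - w3) (de - Dop w3).
  move=> w1 v1 w2 v2 w3 h1 h2.
  pose S n := ipp (y n.+1 - w1) (u n.+1 - v1) + ipp (x n.+1 - w2) (a2 n - v2)
              + ipp (x n.+1 - w3) (Dop (x n.+1) - Dop w3).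
  apply: (Ucv_ge0 hU (a := S)).
    move=> n; have := hA1.1 _ _ _ _ (A1pt n) h1; have := hA2.1 _ _ _ _ (A2pt n) h2.
    have := Dmono (x n.+1) w3; rewrite /S; lra.
  have T1 : Ucv U (fun n => ipp (y n.+1 - x n.+1) (u n.+1 - v1)) 0.
    apply: cvz_Ucv => //; apply: cvz_eq (ip_cvz (t := fun n => u n.+1 - v1) (K := 2 * K + 2 * N v1) _ snull) _.
      move=> n; have := Nn_add2 I (u n.+1) (- v1); rewrite NnN; have := (hK n.+1).2; lra.
    by move=> n; rewrite subr0.
  have T2 : Ucv U (fun n => ipp (a2 n + u n.+1 + Dop (x n.+1)) (x n.+1 - w2)) 0.
    apply: cvz_Ucv => //; apply: cvz_eq (ip_cvz (t := fun n => x n.+1 - w2) (K := 2 * K + 2 * N w2) _ rnull) _.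
      move=> n; have := Nn_add2 I (x n.+1) (- w2); rewrite NnN; have := (hK n.+1).1; lra.
    by move=> n; rewrite subr0.
  have T3 := hxi (- v1 - v2 - Dop w3).
  have T4 := hom (w2 - w1).
  have T5 := hde (w2 - w3).
  have := Ucv_add hU (Ucv_add hU (Ucv_add hU (Ucv_add hU (Ucv_add hU T1 T2) T3) T4) T5)
            (Ucv_const hU (ipp w1 v1 + ipp w2 v2 + ipp w3 (Dop w3))).
  rewrite Phi_ident => hh; apply: (Ucv_ext hU hh) => n.
  by rewrite /S S_ident.
have hA1xi : A1 xi om.
  apply: hA1.2 => w1 v1 h1.
  rewrite leNgt; apply/negP => hneg.
  have hA2xi : A2 xi (- (om + de)).
    apply: hA2.2 => w2 v2 h2; have := hPhi w1 v1 w2 v2 xi h1 h2; rewrite subrr ip0l; lra.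
  have := hPhi w1 v1 xi (- (om + de)) xi h1 hA2xi; rewrite !subrr !ip0l; lra.
have hA2xi : A2 xi (- (om + de)).
  apply: hA2.2 => w2 v2 h2; have := hPhi xi om w2 v2 xi hA1xi h2; rewrite !subrr !ip0l; lra.
have hdeq : de = Dop xi.
  apply: Dlemma => w3; have := hPhi xi om xi (- (om + de)) w3 hA1xi hA2xi; rewrite !subrr !ip0l; lra.
exists xi, om; split.
  split => //; rewrite (_ : - (om + B xi + C xi) = - (om + de)) // hdeq /Dop addrA; by [].
split.
- move=> h.
  have hd : Ucv U (fun n => ipp (x n.+1 - x n) h) 0.
    apply: cvz_Ucv => //; apply: cvz_eq (ip_cvz (s := fun n => x n.+1 - x n) (t := fun _ => h) (K := N h) _ hdx) _ => //.
    by move=> n; rewrite subr0.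
  apply: (Ucv_comb hU (hxi h) hd (c := 1) (d := -1) (k := 0)) => [n|]; last by ring.
  rewrite ipBl; ring.
- move=> h.
  have hd : Ucv U (fun n => ipp (u n.+1 - u n) h) 0.
    apply: cvz_Ucv => //; apply: cvz_eq (ip_cvz (s := fun n => u n.+1 - u n) (t := fun _ => h) (K := N h) _ hdu) _ => //.
    by move=> n; rewrite subr0.
  apply: (Ucv_comb hU (hom h) hd (c := 1) (d := -1) (k := 0)) => [n|]; last by ring.
  rewrite ipBl; ring.
Qed.

Lemma opial U0 U1 xi0 om0 xi1 om1 : goodF U0 -> goodF U1 -> Sol xi0 om0 -> Sol xi1 om1 ->
  (forall h, Ucv U0 (fun n => ipp (x n) h) (ipp xi0 h)) ->
  (forall h, Ucv U0 (fun n => ipp (u n) h) (ipp om0 h)) ->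
  (forall h, Ucv U1 (fun n => ipp (x n) h) (ipp xi1 h)) ->
  (forall h, Ucv U1 (fun n => ipp (u n) h) (ipp om1 h)) ->
  xi0 = xi1.
Proof.
move=> hU0 hU1 hs0 hs1 hx0 hu0 hx1 hu1.
have [l0 hl0] := V_cv hs0; have [l1 hl1] := V_cv hs1.
pose hX := (om0 - om1) - gamma^-1 *: (xi0 - xi1).
pose hV := (xi0 - xi1) - lambda *: (om0 - om1).
pose c0 := VF I gamma lambda xi0 om0 - VF I gamma lambda xi1 om1.
pose G n := VF I gamma lambda (x n - xi0) (u n - om0) - VF I gamma lambda (x n - xi1) (u n - om1).
have hG : cvz (fun n => G n - (l0 - l1)).
  by apply: cvz_eq (cvz_add hl0 (cvz_scale (-1) hl1)) _ => n; rewrite /G; ring.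
have L0 : Ucv U0 G (ipp xi0 hX + ipp om0 hV + c0).
  apply: (Ucv_comb hU0 (hx0 hX) (hu0 hV) (c := 1) (d := 1) (k := c0)) => [n|]; last by ring.
  by rewrite /G /hX /hV /c0 Gident; ring.
have L1 : Ucv U1 G (ipp xi1 hX + ipp om1 hV + c0).
  apply: (Ucv_comb hU1 (hx1 hX) (hu1 hV) (c := 1) (d := 1) (k := c0)) => [n|]; last by ring.
  by rewrite /G /hX /hV /c0 Gident; ring.
have e0 := Ucv_unique hU0 (cvz_Ucv hU0 hG) L0.
have e1 := Ucv_unique hU1 (cvz_Ucv hU1 hG) L1.
have e2 : ipp (xi0 - xi1) hX + ipp (om0 - om1) hV = 0 by rewrite !ipBl; lra.
have key : forall a b : H, ipp a (b - gamma^-1 *: a) + ipp b (a - lambda *: b) = 0 -> Nn I a = 0.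
  move=> a b e3; rewrite !ipBr !ipZr (ip_sym _ b a) -/(Nn I a) -/(Nn I b) in e3.
  have hyg := young I a b (ltac:(by rewrite invr_gt0) : 0 < lambda^-1).
  rewrite invrK in hyg.
  have hk := k1_gt0; rewrite /k1 /kap1 in hk.
  have hb1 : 0 < beta^-1 by rewrite invr_gt0.
  have hNa := Nn_ge0 I a; have hNb := Nn_ge0 I b.
  move: hyg hk hb1 e3; move: (gamma^-1) (lambda^-1) (beta^-1) (ipp a b) => gi li bi p.
  move=> hyg hk hb1 e3.
  have h4 : 2 * p = gi * Nn I a + lambda * Nn I b by lra.
  have h3 : gi * Nn I a <= li * Nn I a by lra.
  have h5 : (gi - li) * Nn I a <= 0 by rewrite mulrBl subr_le0.
  rewrite ltr_pdivlMr // mul0r in hk.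
  have hgl : 0 < gi - li.
    have h6 : 0 < 2 * L + bi by apply: addr_gt0 => //; apply: mulr_gt0.
    have := addr_gt0 hk h6.
    by have -> : gi - li - 2 * L - bi + (2 * L + bi) = gi - li by ring.
  apply/eqP; rewrite eq_le hNa andbT.
  by move: h5; rewrite (pmulr_rle0 _ hgl).
have hN0 := key _ _ e2.
by have := Nn_eq0 hN0 => /eqP; rewrite subr_eq0 => /eqP.
Qed.

Lemma main_conv : exists xbar, zer4 A1 A2 B C xbar /\ weak_cvg I x xbar.
Proof.
have [U0 [hU0 _]] := @goodF_exists setT (fun N => ex_intro _ N (conj (leqnn N) Logic.I)).
have [xi [om [hs [hx0 hu0]]]] := cluster hU0.
exists xi; split.
  exists om, (- (om + B xi + C xi)); split; first exact: hs.1.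
  split; first exact: hs.2.
  by apply: (@vec_eq _ _ I) => t; rewrite !(ipDl, ipNl) ip0l; ring.
move=> h.
suff hc : cvz (fun n => ipp (x n) h - ipp xi h).
  apply/cvgrPdist_lt => e he; have [M hM] := hc e he.
  exists M => // n /= hn; rewrite distrC; exact: hM.
apply: contrapT => hnc.
have [e [he hE]] : exists e, 0 < e /\ forall N, exists n, (N <= n)%N /\ e <= `|ipp (x n) h - ipp xi h|.
  apply: contrapT => hne; apply: hnc => e he; apply: contrapT => hN; apply: hne.
  exists e; split => // M; apply: contrapT => hn; apply: hN; exists M => n hn'.
  rewrite ltNge; apply/negP => hle; apply: hn; by exists n.
have [U1 [hU1 hEU]] := @goodF_exists [set n | e <= `|ipp (x n) h - ipp xi h|] hE.
have [xi1 [om1 [hs1 [hx1 hu1]]]] := cluster hU1.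
have exi := opial hU0 hU1 hs hs1 hx0 hu0 hx1 hu1.
have hA := hx1 h e he; rewrite -exi in hA.
have [n [hn1 hn2]] := gF_ex hU1 (gFI hU1 hA hEU).
move: hn1 hn2 => /= hn1 hn2; lra.
Qed.

End Algo.

Unset Implicit Arguments.

Theorem theorem3p3 (R : realType) (H : lmodType R) (I : hilbert H)
  (A1 A2 : H -> H -> Prop) (B C : H -> H) (L beta lambda gamma : R)
  (x y u : nat -> H) (xm1 : H) :
  maximally_monotone I A1 -> maximally_monotone I A2 ->
  monotone_fun I B -> 0 < L -> L_lipschitz I L B ->
  0 < beta -> cocoercive I beta C ->
  (exists z, zer4 A1 A2 B C z) ->
  0 < lambda ->
  0 < gamma -> gamma < lambda * beta / (beta + lambda * (2 * beta * L + 1)) ->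
  (forall n : nat,
     resolvent gamma A2
       (x n - gamma *: u n - gamma *: (2 *: B (x n) - B (xprev x xm1 n)) - gamma *: C (x n))
       (x n.+1)) ->
  (forall n : nat,
     resolvent lambda A1 (2 *: x n.+1 - x n + lambda *: u n) (y n.+1)) ->
  (forall n : nat, u n.+1 = u n + lambda^-1 *: (2 *: x n.+1 - x n - y n.+1)) ->
  exists xbar : H, zer4 A1 A2 B C xbar /\ weak_cvg I x xbar.
Proof.
move=> hA1 hA2 hB hL hLip hbe hC hzer hlam hg hgam hx hy hu.
exact: (main_conv hA1 hA2 hB hL hLip hbe hC hzer hlam hg hgam hx hy hu).
Qed.
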